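(* Let $n,d$ be positive integers such that $n$ or $d$ is odd. Then for all but finitely many primes $p$ (the exceptional set depending on $n$ and $d$), for every power $q$ of $p$, \[ \frac{1}{|\mathrm{Conf}_n(\mathbb{F}_q)|}\sum_{f\in \mathrm{Conf}_n(\mathbb{F}_q)} |X_f(\mathbb{F}_q)| = q . \]
   Context: $\mathrm{Conf}_n(\mathbb{F}_q)$ denotes the set of monic, square-free polynomials $f\in\mathbb{F}_q[x]$ of degree $n$ (square-free meaning distinct roots in $\overline{\mathbb{F}}_q$). For such $f$, $X_f$ is the affine curve $y^d=f(x)$ and $X_f(\mathbb{F}_q)=\{(x,y)\in\mathbb{F}_q^2: y^d=f(x)\}$. *)

(* Defs.v *)
From HB Require Import structures.
From mathcomp Require Import all_boot all_order all_algebra all_field.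
Set Implicit Arguments. Unset Strict Implicit. Unset Printing Implicit Defensive.
Import GRing.Theory.
Local Open Scope ring_scope.

(* The monic polynomial of degree n with lower coefficients c_0..c_{n-1}:
   x^n + c_{n-1} x^{n-1} + ... + c_0.  This is a bijection between
   {ffun 'I_n -> F} and monic polynomials of degree n over F. *)
Definition monic_of (F : fieldType) (n : nat) (c : {ffun 'I_n -> F}) : {poly F} :=
  'X^n + \sum_(i < n) c i *: 'X^i.

(* Conf_n(F): monic square-free (separable = distinct roots in an
   algebraic closure) polynomials of degree n, encoded by coefficients. *)
Definition Conf (F : finFieldType) (n : nat) : {set {ffun 'I_n -> F}} :=
  [set c | separable_poly (monic_of c)].

Definition npoints (F : finFieldType) (d : nat) (f : {poly F}) : nat :=
  #|[set xy : F * F | xy.2 ^+ d == f.[xy.1]]|.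

(* Main.v *)
Require Import Defs.
From HB Require Import structures.
From mathcomp Require Import all_boot all_order all_algebra all_field.
From Stdlib Require Import Classical Lia.
From mathcomp Require Import zify.
Set Implicit Arguments. Unset Strict Implicit. Unset Printing Implicit Defensive.
Import GRing.Theory Num.Theory.
Local Open Scope ring_scope.

Lemma frob_root (F : finFieldType) (u : {poly F}) :
  u^`() = 0 -> (1 < size u)%N -> exists w : {poly F}, (1 < size w)%N /\ w ^+ 2 %| u.
Proof.
move=> du su.
have [p pr chp] := finPcharP F.
have chP : p \in [pchar {poly F}] by rewrite pchar_poly.
have inj : injective (fun a : F => a ^+ p).
  move=> a b /= e; have := @fmorph_inj _ _ (pFrobenius_aut chp) a b.
  rewrite /= !pFrobenius_autE; exact.
pose r := invF inj.
have rK a : r a ^+ p = a by exact: (f_invF inj).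
have cu i : ~~ (p %| i)%N -> u`_i = 0.
  case: i => [|j]; first by rewrite dvdn0.
  move=> nd; have := coef_deriv u j; rewrite du coef0 => /esym/eqP. rewrite -mulr_natr mulf_eq0 => /orP[/eqP //|].
  by rewrite -(dvdn_pcharf chp) (negbTE nd).
pose N := size u.
pose w := \poly_(i < N) r (u`_(i * p)).
have wp : w ^+ p = u.
  rewrite -(pFrobenius_autE chP) /w poly_def rmorph_sum /=.
  under eq_bigr do rewrite (pFrobenius_autE chP) exprZn rK -exprM.
  apply/polyP => k; rewrite coef_sum.
  under eq_bigr do rewrite coefZ coefXn.
  have [/dvdnP [j ->]|nd] := boolP (p %| k)%N; last first.
    rewrite cu // big1 // => i _; case: eqP => [e|]; last by rewrite mulr0.
    by case/negP: nd; rewrite e dvdn_mull.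
  have [ltj|gej] := ltnP j N.
    rewrite (bigD1 (Ordinal ltj)) //= eqxx mulr1 big1 ?addr0 // => i ne.
    rewrite eqn_pmul2r ?prime_gt0 //; case: eqP => [e|]; last by rewrite mulr0.
    by case/eqP: ne; apply: val_inj; rewrite /= e.
  rewrite big1; last first.
    move=> i _; rewrite eqn_pmul2r ?prime_gt0 //; case: eqP => [e|]; last by rewrite mulr0.
    by have := ltn_ord i; rewrite -e ltnNge gej.
  apply/esym/(nth_default 0); apply: leq_trans gej _.
  by rewrite leq_pmulr ?prime_gt0.
exists w; split.
  rewrite ltnNge; apply/negP => /size1_polyC wc.
  by move: su; rewrite -wp wc -rmorphXn size_polyC; case: (_ != 0).
by rewrite -wp dvdp_exp2l // prime_gt1.
Qed.

Lemma nonsep_sq (F : finFieldType) (f : {poly F}) :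
  f != 0 -> ~~ separable_poly f -> exists w : {poly F}, (1 < size w)%N /\ w ^+ 2 %| f.
Proof.
move=> fn0 ns; case: (classic (exists w : {poly F}, (1 < size w)%N /\ w ^+ 2 %| f)) => // H.
exfalso; move/negP: ns; apply; apply/separable_polyP; split.
  apply/poly_square_freeP => u su; apply/negP => du.
  case: (ltngtP (size u) 1) su => // [|lt1 _]; last by apply: H; exists u.
  rewrite ltnS leqn0 size_poly_eq0 => /eqP u0 _.
  by move: du; rewrite u0 expr0n /= dvd0p (negbTE fn0).
move=> u uf su; apply/negP => /eqP du.
have [w [sw wu]] := frob_root du su; apply: H; exists w; split => //.
exact: dvdp_trans wu uf.
Qed.

Lemma decomp_ex (F : finFieldType) (f : {poly F}) : f \is monic ->
  exists s h : {poly F}, [/\ s \is monic, h \is monic, separable_poly s & f = s * h ^+ 2].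
Proof.
have [N] := ubnP (size f); elim: N f => // N IH f ltf mf.
have fn0 : f != 0 by apply: monic_neq0.
have [sf|nsf] := boolP (separable_poly f).
  by exists f, 1; rewrite monic1 expr1n mulr1.
have [w [sw wf]] := nonsep_sq fn0 nsf.
have wn0 : w != 0 by rewrite -size_poly_gt0 (ltn_trans _ sw).
pose w1 := (lead_coef w)^-1 *: w.
have lw : lead_coef w != 0 by rewrite lead_coef_eq0.
have mw1 : w1 \is monic by rewrite monicE lead_coefZ mulVf.
have w1f : w1 ^+ 2 %| f by rewrite exprZn dvdpZl // expf_neq0 // invr_eq0.
have mw2 : w1 ^+ 2 \is monic by rewrite monic_exp.
pose g := f %/ w1 ^+ 2.
have fg : f = g * w1 ^+ 2 by apply/eqP; rewrite -Pdiv.IdomainMonic.dvdp_eq.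
have gn0 : g != 0 by apply: contraNneq fn0 => g0; rewrite fg g0 mul0r.
have mg : g \is monic by rewrite -(monicMr g mw2) -fg.
have sw1 : size w1 = size w by rewrite size_scale // invr_eq0.
have ltg : (size g < N)%N.
  have e := size_Mmonic gn0 mw2.
  have k2 : (2 < size (w1 ^+ 2))%N.
    have := size_exp w1 2; rewrite sw1; move: (size (w1 ^+ 2)) sw => k.
    case: (size w) => // [[|m]] // _; lia.
  move: ltf; rewrite fg e; move: (size (w1 ^+ 2)) k2 => k.
  have := size_poly_gt0 g; rewrite gn0; lia.
have [s [h [ms mh ss gd]]] := IH g ltg mg.
exists s, (h * w1); split => //; first by rewrite monicMl.
by rewrite fg gd exprMn [RHS]mulrA.
Qed.

Lemma decomp_uniq (F : finFieldType) (s1 h1 s2 h2 : {poly F}) :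
  h1 \is monic -> h2 \is monic -> separable_poly s1 -> separable_poly s2 ->
  s1 * h1 ^+ 2 = s2 * h2 ^+ 2 -> h1 = h2 /\ s1 = s2.
Proof.
move=> m1 m2 sp1 sp2 e.
have h1n0 : h1 != 0 by apply: monic_neq0.
have h2n0 : h2 != 0 by apply: monic_neq0.
pose t := gcdp h1 h2.
have tn0 : t != 0 by rewrite gcdp_eq0 negb_and h1n0.
have cop : coprimep (h1 %/ t) (h2 %/ t) by apply: coprimep_div_gcd; rewrite h1n0.
have d1 : h1 = h1 %/ t * t by rewrite divpK ?dvdp_gcdl.
have d2 : h2 = h2 %/ t * t by rewrite divpK ?dvdp_gcdr.
move: cop d1 d2; set a1 := h1 %/ t; set a2 := h2 %/ t => cop d1 d2; clearbody a1 a2.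
have e2 : s1 * a1 ^+ 2 = s2 * a2 ^+ 2.
  apply: (mulIf (expf_neq0 2 tn0)).
  by rewrite -[LHS]mulrA -[RHS]mulrA -!exprMn -d1 -d2.
have c1 : size a1 == 1%N.
  apply: contraT => ns; have := separable_nosquare (u:=a1) (k:=2) sp2 (isT : (1 < 2)%N) ns.
  rewrite -(Gauss_dvdpl _ (coprimep_expr 2 (coprimep_expl 2 cop))) -e2.
  by rewrite dvdp_mull.
have c2 : size a2 == 1%N.
  apply: contraT => ns; have := separable_nosquare (u:=a2) (k:=2) sp1 (isT : (1 < 2)%N) ns.
  have cop' : coprimep a2 a1 by rewrite coprimep_sym.
  rewrite -(Gauss_dvdpl _ (coprimep_expr 2 (coprimep_expl 2 cop'))) e2.
  by rewrite dvdp_mull.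
have eq1 : h1 %= t.
  move/size_poly1P: c1 => [c cn0 ce]; rewrite d1 ce mul_polyC eqp_scale //.
have eq2 : h2 %= t.
  move/size_poly1P: c2 => [c cn0 ce]; rewrite d2 ce mul_polyC eqp_scale //.
have hh : h1 = h2.
  apply/eqP; rewrite -eqp_monic //; apply: eqp_trans eq1 _; by rewrite eqp_sym.
split => //; apply: (mulIf (expf_neq0 2 h1n0)); by rewrite e hh.
Qed.

Section MO.
Variable F : fieldType.

Definition cfn n (c : {ffun 'I_n -> F}) (k : nat) : F := oapp c 0 (insub k).

Lemma cfnE n (c : {ffun 'I_n -> F}) (i : 'I_n) : cfn c i = c i.
Proof. by rewrite /cfn valK. Qed.

Lemma monic_ofE n (c : {ffun 'I_n -> F}) : monic_of c = 'X^n + \poly_(i < n) cfn c i.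
Proof.
rewrite /monic_of poly_def; congr (_ + _); apply: eq_bigr => i _.
by rewrite cfnE.
Qed.

Lemma coef_monic_of n (c : {ffun 'I_n -> F}) k :
  (monic_of c)`_k = if (k < n)%N then cfn c k else (k == n)%:R.
Proof.
rewrite monic_ofE coefD coefXn coef_poly.
case: ltnP => lt; first by rewrite (ltn_eqF lt) add0r.
by rewrite addr0.
Qed.

Lemma size_monic_of n (c : {ffun 'I_n -> F}) : size (monic_of c) = n.+1.
Proof.
rewrite monic_ofE size_polyDl ?size_polyXn // ltnS.
exact: size_poly.
Qed.

Lemma monic_of_monic n (c : {ffun 'I_n -> F}) : monic_of c \is monic.
Proof.
by rewrite monicE /lead_coef size_monic_of coef_monic_of ltnn eqxx.
Qed.

Lemma monic_of_coef n (c : {ffun 'I_n -> F}) (i : 'I_n) : (monic_of c)`_i = c i.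
Proof. by rewrite coef_monic_of ltn_ord cfnE. Qed.

Lemma monic_of_inj n : injective (@monic_of F n).
Proof.
move=> c1 c2 e; apply/ffunP => i; by rewrite -!monic_of_coef e.
Qed.

Lemma monic_of_cf n (p : {poly F}) : p \is monic -> size p = n.+1 ->
  monic_of [ffun i : 'I_n => p`_i] = p.
Proof.
move=> mp sp; apply/polyP => k; rewrite coef_monic_of.
case: ltnP => lt; first by rewrite /cfn insubT /= ffunE.
case: eqP => [->|ne].
  by move/monicP: mp; rewrite /lead_coef sp.
rewrite nth_default // sp; lia.
Qed.

End MO.

Section MOF.
Variable F : finFieldType.

Lemma count_monic_of n (g : {poly F}) : g \is monic -> size g = n.+1 ->
  (\sum_(c : {ffun 'I_n -> F}) (monic_of c == g)%:R : rat) = 1.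
Proof.
move=> mg sg; rewrite (bigD1 [ffun i : 'I_n => g`_i]) //= monic_of_cf // eqxx.
rewrite big1 ?addr0 // => c ne; case: eqP => // e; case/eqP: ne.
by apply: monic_of_inj; rewrite monic_of_cf.
Qed.

End MOF.

Section Count.
Variable F : finFieldType.

Lemma size_sq (h : {poly F}) : h \is monic -> size (h ^+ 2) = ((size h).-1 * 2).+1.
Proof.
move=> mh; rewrite -size_exp prednK // size_poly_gt0 expf_neq0 //.
exact: monic_neq0.
Qed.

Lemma size_sh (s h : {poly F}) : s \is monic -> h \is monic ->
  size (s * h ^+ 2) = (size s + (size h).-1 * 2)%N.
Proof.
move=> ms mh; rewrite size_Mmonic ?monic_neq0 ?monic_exp // size_sq //.
by rewrite addnS.
Qed.

Lemma decomp_count n (c : {ffun 'I_n -> F}) :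
  \sum_(m < n./2.+1) \sum_(s : {ffun 'I_(n - m.*2) -> F}) \sum_(h : {ffun 'I_m -> F})
    ((separable_poly (monic_of s) && (monic_of c == monic_of s * monic_of h ^+ 2))%:R : rat) = 1.
Proof.
have [s0 [h0 [ms mh ss e]]] := decomp_ex (monic_of_monic c).
have sz := size_sh ms mh; rewrite -e size_monic_of in sz.
pose m0 := (size h0).-1.
have sh0 : size h0 = m0.+1 by rewrite prednK // size_poly_gt0 monic_neq0.
have ss0 : size s0 = (n - m0.*2).+1.
  have : (0 < size s0)%N by rewrite size_poly_gt0 monic_neq0.
  rewrite -/m0 in sz; lia.
have lm0 : (m0 < n./2.+1)%N.
  rewrite ltnS -(doubleK m0) half_leq //; rewrite -/m0 in sz; lia.
rewrite (bigD1 (Ordinal lm0)) //= [X in _ + X]big1 ?addr0; last first.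
  move=> m ne; apply: big1 => s _; apply: big1 => h _.
  case: andP => // [[sps /eqP ec]]; case/eqP: ne; apply: val_inj => /=.
  have [hh _] := decomp_uniq (monic_of_monic h) mh sps ss (etrans (esym ec) e).
  by have := size_monic_of h; rewrite hh sh0 => -[].
rewrite (bigD1 [ffun i : 'I_(n - m0.*2) => s0`_i]) //= [X in _ + X]big1 ?addr0; last first.
  move=> s ne; apply: big1 => h _.
  case: andP => // [[sps /eqP ec]]; case/eqP: ne.
  have [_ hs] := decomp_uniq (monic_of_monic h) mh sps ss (etrans (esym ec) e).
  by apply: monic_of_inj; rewrite monic_of_cf // hs.
rewrite (bigD1 [ffun i : 'I_m0 => h0`_i]) //= [X in _ + X]big1 ?addr0; last first.
  move=> h ne; case: andP => // [[sps /eqP ec]]; case/eqP: ne.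
  have [hh _] := decomp_uniq (monic_of_monic h) mh sps ss (etrans (esym ec) e).
  by apply: monic_of_inj; rewrite monic_of_cf // hh.
by rewrite !monic_of_cf // ss e eqxx.
Qed.

End Count.

Section Rec.
Variable F : finFieldType.

Lemma recursion n (x0 : F) (psi : F -> rat) :
  \sum_(c : {ffun 'I_n -> F}) psi (monic_of c).[x0] =
  \sum_(m < n./2.+1) \sum_(s in Conf F (n - m.*2)) \sum_(h : {ffun 'I_m -> F})
     psi ((monic_of s).[x0] * (monic_of h).[x0] ^+ 2).
Proof.
have E (c : {ffun 'I_n -> F}) : psi (monic_of c).[x0] =
  \sum_(m < n./2.+1) \sum_(s : {ffun 'I_(n - m.*2) -> F}) \sum_(h : {ffun 'I_m -> F})
    ((separable_poly (monic_of s) && (monic_of c == monic_of s * monic_of h ^+ 2))%:R : rat) *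
     psi ((monic_of s).[x0] * (monic_of h).[x0] ^+ 2).
  rewrite -[LHS]mul1r -{1}(decomp_count c) mulr_suml; apply: eq_bigr => m _.
  rewrite mulr_suml; apply: eq_bigr => s _.
  rewrite mulr_suml; apply: eq_bigr => h _.
  case: andP => [[_ /eqP ->]|]; last by rewrite !mul0r.
  by rewrite hornerM horner_exp.
under eq_bigr do rewrite E.
rewrite exchange_big; apply: eq_bigr => m _.
rewrite exchange_big [RHS]big_mkcond; apply: eq_bigr => s _.
rewrite exchange_big inE; case: ifP => sps; last first.
  by apply: big1 => h _; apply: big1 => c _; rewrite mul0r.
apply: eq_bigr => h _; rewrite -big_distrl /=.
under eq_bigr do rewrite /=.
rewrite count_monic_of ?mul1r //.
  by rewrite monicMl ?monic_of_monic // monic_exp // monic_of_monic.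
rewrite size_sh ?monic_of_monic // !size_monic_of /=.
have := ltn_ord m; rewrite ltnS -leq_double => H.
have H2 := odd_double_half n; rewrite -!muln2 in H H2.
have Hm : (m * 2 <= n)%N by apply: leq_trans H _; rewrite -{2}H2 leq_addl.
rewrite -muln2; move: Hm; move: (nat_of_ord m) => k; lia.
Qed.

End Rec.

Section Main.
Variable F : finFieldType.
Variable d : nat.

Definition balanced (psi : F -> rat) :=
  [/\ psi 0 = 0, (forall a v, v != 0 -> psi (a * v ^+ d) = psi a) & \sum_a psi a = 0].

Lemma sum_scale (phi : F -> rat) b : b != 0 -> \sum_a phi (a * b) = \sum_a phi a.
Proof. by move=> bn0; rewrite [RHS](reindex_inj (mulIf bn0)). Qed.

Lemma sum_shift (phi : F -> rat) b : \sum_a phi (b + a) = \sum_a phi a.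
Proof. by rewrite [RHS](reindex_inj (addrI b)). Qed.

Lemma bal_scale psi b : balanced psi -> b != 0 -> balanced (fun a => psi (a * b)).
Proof.
move=> [p0 pv ps] bn0; split => /=; first by rewrite mul0r.
  by move=> a v vn0; rewrite mulrAC pv.
by rewrite sum_scale.
Qed.

Lemma natr_neq0 k : (0 < k)%N -> (k%:R : rat) != 0.
Proof. by move=> k0; rewrite pnatr_eq0 -lt0n. Qed.

Lemma unif m (x0 : F) (phi : F -> rat) : (0 < m)%N -> \sum_z phi z = 0 ->
  \sum_(h : {ffun 'I_m -> F}) phi (monic_of h).[x0] = 0.
Proof.
move=> m0 ps.
pose o := Ordinal m0.
pose sh (z : F) (h : {ffun 'I_m -> F}) : {ffun 'I_m -> F} :=
  [ffun i => h i + (if i == o then z else 0)].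
have shE z h : (monic_of (sh z h)).[x0] = (monic_of h).[x0] + z.
  have -> : monic_of (sh z h) = monic_of h + z%:P.
    rewrite /monic_of -addrA; congr (_ + _).
    under eq_bigr do rewrite ffunE scalerDl.
    rewrite big_split /=; congr (_ + _).
    rewrite (bigD1 o) //= big1 ?addr0; first by rewrite expr0 alg_polyC.
    by move=> i /negbTE ->; rewrite scale0r.
  by rewrite hornerD hornerC.
have shI z : injective (sh z).
  move=> h1 h2 e; apply/ffunP => i.
  by have := congr1 (fun f : {ffun 'I_m -> F} => f i) e; rewrite /sh !ffunE => /addIr.
set S := \sum_h _.
have Sz z : S = \sum_(h : {ffun 'I_m -> F}) phi ((monic_of h).[x0] + z).
  have R : \sum_(h : {ffun 'I_m -> F}) phi (monic_of (sh z h)).[x0] = S.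
    by rewrite /S [RHS](reindex_inj (shI z)).
  by rewrite -R; apply: eq_bigr => h _; rewrite shE.
have : S *+ #|F| = 0.
  rewrite -sumr_const.
  transitivity (\sum_z \sum_(h : {ffun 'I_m -> F}) phi ((monic_of h).[x0] + z)).
    by apply: eq_bigr => z _; rewrite -Sz.
  rewrite exchange_big; apply: big1 => h _.
  by rewrite sum_shift.
move/eqP; rewrite -mulr_natr mulf_eq0 => /orP[/eqP //|].
by rewrite (negbTE (natr_neq0 (ltnW (finNzRing_gt1 F)))).
Qed.


Lemma sq_sum psi : balanced psi -> odd d -> \sum_z psi (z ^+ 2) = 0.
Proof.
move=> [p0 pv ps] od.
set S := \sum_z _.
have Sw w : w != 0 -> S = \sum_z psi (w * z ^+ 2).
  move=> wn0; pose e := (d.+1)./2.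
  have e2 : (e * 2 = d.+1)%N.
    rewrite muln2 /e -[in RHS](odd_double_half d.+1) /= od //.
  have wen0 : w ^+ e != 0 by rewrite expf_neq0.
  have R : \sum_(z : F) psi ((w ^+ e * z) ^+ 2) = S.
    by rewrite /S [RHS](reindex_inj (mulfI wen0)).
  rewrite -R; apply: eq_bigr => z _.
  by rewrite exprMn -exprM e2 exprS mulrAC pv.
have : S *+ #|[pred w : F | w != 0]| = 0.
  rewrite -sumr_const.
  transitivity (\sum_(w | w != 0) \sum_(z : F) psi (w * z ^+ 2)).
    by apply: eq_bigr => w wn0; rewrite -Sw.
  have full : \sum_(w : F) \sum_(z : F) psi (w * z ^+ 2) = 0.
    rewrite exchange_big; apply: big1 => z _.
    have [->|zn0] := eqVneq z 0.
      by apply: big1 => w _; rewrite expr0n mulr0.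
    by rewrite sum_scale ?expf_neq0.
  rewrite (bigD1 0) //= big1 ?add0r // in full.
  by move=> z _; rewrite mul0r.
move/eqP; rewrite -mulr_natr mulf_eq0 => /orP[/eqP //|].
have -> : #|[pred w : F | w != 0]| = #|F|.-1 by rewrite -(cardC1 0); apply: eq_card.
by rewrite (negbTE (natr_neq0 _)) // -subn1 subn_gt0 finNzRing_gt1.
Qed.

Lemma conf_cast k k' (G : {poly F} -> rat) : k = k' ->
  \sum_(s in Conf F k) G (monic_of s) = \sum_(s in Conf F k') G (monic_of s).
Proof. by move=> ->. Qed.

Lemma monic_of0 (s : {ffun 'I_0 -> F}) : monic_of s = 1.
Proof. by rewrite /monic_of big_ord0 addr0 expr0. Qed.

Lemma sum_ffun0 (G : {ffun 'I_0 -> F} -> rat) (g : rat) :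
  (forall s, G s = g) -> \sum_s G s = g.
Proof.
move=> Gs; under eq_bigr do rewrite Gs.
by rewrite sumr_const card_ffun card_ord expn0.
Qed.

Lemma conf0 (G : {poly F} -> rat) : \sum_(s in Conf F 0) G (monic_of s) = G 1.
Proof.
rewrite (eq_bigl predT); last first.
  by move=> s; rewrite inE monic_of0 /= unlock /separable_poly coprime1p.
by apply: sum_ffun0 => s; rewrite monic_of0.
Qed.

Lemma conf0k k (G : {poly F} -> rat) : k = 0%N -> \sum_(s in Conf F k) G (monic_of s) = G 1.
Proof. by move=> ->; apply: conf0. Qed.

Lemma main_vanish (x0 : F) n : (0 < n)%N -> odd n || odd d -> forall psi, balanced psi ->
  \sum_(c in Conf F n) psi (monic_of c).[x0] = 0.
Proof.
have [N] := ubnP n; elim: N n => // N IH n ltn n0 par psi bal.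
have E := recursion n x0 psi.
case: (bal) => p0 pv ps.
rewrite unif // big_ord_recl /= in E.
rewrite [X in _ + X]big1 ?addr0 in E; last first.
  move=> i _.
  have hm' : ((bump 0 i).*2 <= n)%N.
    have H : (i.+1 <= n./2)%N := ltn_ord i.
    have H2 := odd_double_half n.
    rewrite /bump /= add1n -!muln2 in H2 *; lia.
  have [e0|epos] := eqVneq (n - (bump 0 i).*2)%N 0%N.
    rewrite (conf0k (fun p => \sum_(h : {ffun 'I_(bump 0 i) -> F})
       psi (p.[x0] * (monic_of h).[x0] ^+ 2)) e0) /=.
    under eq_bigr do rewrite hornerC mul1r.
    apply: (@unif _ x0 (fun z => psi (z ^+ 2))) => //.
    apply: sq_sum => //; move: par; have -> // : odd n = false.
    have -> : n = ((bump 0 i) * 2)%N by move: e0 hm'; rewrite -muln2; lia.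
    by rewrite muln2 odd_double.
  rewrite exchange_big; apply: big1 => h _.
  have [b0|bn0] := eqVneq ((monic_of h).[x0] ^+ 2) 0.
    by apply: big1 => s _; rewrite b0 mulr0.
  apply: (IH _ _ _ _ (fun a => psi (a * ((monic_of h).[x0] ^+ 2)))).
  - have := hm'; move: ltn epos; rewrite /bump /= add1n -!muln2; lia.
  - by rewrite lt0n.
  - by rewrite oddB // odd_double addbF.
  - exact: bal_scale.
move: E; rewrite (@conf_cast (n - 0.*2) n (fun p => \sum_(h : {ffun 'I_0 -> F})
       psi (p.[x0] * (monic_of h).[x0] ^+ 2))) ?subn0 //= => E.
rewrite [RHS]E; apply: eq_bigr => s _; apply/esym; apply: sum_ffun0 => h.
by rewrite monic_of0 hornerC expr1n mulr1.
Qed.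

End Main.

Section Final.
Variable F : finFieldType.

Lemma sep_exists n : (0 < n)%N ->
  exists P : {poly F}, [/\ P \is monic, size P = n.+1 & separable_poly P].
Proof.
move=> n0; have [p pr chp] := finPcharP F.
have [hn|hn] := eqVneq (n%:R : F) 0; last first.
  exists ('X^n - 1); split; first exact: monic_Xn_sub_1.
    exact: size_Xn_sub_1.
  exact: cyclotomic.separable_Xn_sub_1.
have n2 : (1 < n)%N.
  have : (p %| n)%N by rewrite (dvdn_pcharf chp) hn.
  move/dvdn_leq => /(_ n0); have := prime_gt1 pr; lia.
have sX : size (- 'X : {poly F}) = 2 by rewrite size_polyN size_polyX.
have sP : size ('X^n - 'X : {poly F}) = n.+1.
  by rewrite size_polyDl ?sX size_polyXn.
exists ('X^n - 'X); split => //.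
  by rewrite monicE lead_coefDl ?sX ?size_polyXn // lead_coefXn.
rewrite unlock derivB derivXn derivX -scaler_nat.
have -> : (n%:R : F) = 0 by exact: hn.
rewrite scale0r sub0r -[X in coprimep _ X]scaleN1r coprimepZr ?oppr_eq0 ?oner_eq0 //.
exact: coprimep1.
Qed.

Lemma conf_gt0 n : (0 < n)%N -> (0 < #|Conf F n|)%N.
Proof.
move=> n0; have [P [mP sP spP]] := sep_exists n0.
apply/card_gt0P; exists [ffun i : 'I_n => P`_i].
by rewrite inE monic_of_cf.
Qed.

Lemma npointsE d (f : {poly F}) :
  ((npoints d f)%:R : rat) = \sum_(x : F) \sum_(y : F) ((y ^+ d == f.[x])%:R : rat).
Proof.
rewrite /npoints -sum1_card natr_sum big_mkcond /=.
rewrite [RHS]pair_bigA; apply: eq_bigr => -[x y] _ /=.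
by rewrite inE /=; case: eqP.
Qed.

Definition rho d (a : F) : rat := \sum_(y : F) ((y ^+ d == a)%:R : rat) - 1.

Lemma rho_bal d : (0 < d)%N -> balanced d (rho d).
Proof.
move=> d0; split.
- rewrite /rho (bigD1 0) //= expr0n eqn0Ngt d0 /= eqxx big1 ?addr0 ?subrr //.
  by move=> y yn0; rewrite (negbTE (expf_neq0 _ yn0)).
- move=> a v vn0; rewrite /rho; congr (_ - _).
  have vd : v ^+ d != 0 by rewrite expf_neq0.
  rewrite [LHS](reindex_inj (mulIf vn0)) /=; apply: eq_big => // y _.
  by rewrite exprMn (inj_eq (mulIf vd)).
- rewrite /rho sumrB exchange_big /=.
  rewrite (eq_bigr (fun _ => 1)); first by rewrite subrr.
  move=> y _; rewrite (bigD1 (y ^+ d)) //= eqxx big1 ?addr0 //.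
  by move=> a /negbTE; rewrite eq_sym => ->.
Qed.

Lemma final_count n d : (0 < n)%N -> (0 < d)%N -> odd n || odd d ->
  ((\sum_(c in Conf F n) npoints d (monic_of c))%:R : rat) = (#|F| * #|Conf F n|)%:R.
Proof.
move=> n0 d0 par.
rewrite natr_sum.
under eq_bigr do rewrite npointsE.
transitivity (\sum_(c in Conf F n) \sum_(x : F) (rho d (monic_of c).[x] + 1)).
  by apply: eq_bigr => c _; apply: eq_bigr => x _; rewrite /rho subrK.
rewrite exchange_big /=.
under eq_bigr => x _ do rewrite big_split /= (main_vanish x n0 par (rho_bal d0)) add0r.
by rewrite sumr_const sumr_const -mulrnA mulnC; congr ((_ * _)%N%:R); apply: eq_card.
Qed.

End Final.

Theorem corollary1p3 (n d : nat) :
  (0 < n)%N -> (0 < d)%N -> odd n || odd d ->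
  exists S : seq nat, forall p : nat, prime p -> p \notin S ->
    forall F : finFieldType, p \in [pchar F] ->
      ((\sum_(c in Conf F n) npoints d (monic_of c))%:R / (#|Conf F n|)%:R
         : rat) = (#|F|)%:R.
Proof.
move=> n0 d0 par; exists [::] => p _ _ F _.
rewrite final_count // natrM mulfK //.
by rewrite pnatr_eq0 -lt0n conf_gt0.
Qed.
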